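(* Let $\mathcal{I}$ be an ideal on $\omega$ (containing $\mathrm{fin}$) which is $F_\sigma$, or which is (an isomorphic copy on $\omega$ of) $\mathrm{fin}^\alpha$ for some $\alpha < \omega_1$. Then $\mathcal{I}$ is uniformly weakly $P^+$.
   Context: $\mathrm{fin}$ is the ideal of finite subsets of $\omega$; $\mathcal{I}^+$ denotes subsets not in $\mathcal{I}$; $A \subseteq_{\mathcal{I}} B$ means $A\setminus B \in \mathcal{I}$. $F_\sigma$ refers to $\mathcal{I}$ as a subset of $2^\omega$. Ideals $\mathcal{I}$ on $\Omega$ and $\mathcal{J}$ on $\Omega'$ are isomorphic if there is a bijection $f:\Omega\to\Omega'$ with $A \in \mathcal{J} \iff f^{-1}(A) \in \mathcal{I}$ for all $A \subseteq \Omega'$. The ideals $\mathrm{fin}^\alpha$ on countable sets $X^\alpha$ ($1\le\alpha<\omega_1$) are defined recursively: $\mathrm{fin}^1 = \mathrm{fin}$ on $X^1=\omega$; $\mathrm{fin}^{\alpha+1}$ is the ideal on $X^{\alpha+1} = \omega \times X^\alpha$ given by $A \in \mathrm{fin}^{\alpha+1}$ iff $\{n : (A)_n \notin \mathrm{fin}^\alpha\}$ is finite, where $(A)_n = \{y : (n,y)\in A\}$; for limit $\alpha$, fixing a strictly increasing sequence $\alpha_n$ with supremum $\alpha$, $\mathrm{fin}^\alpha$ is the ideal on $X^\alpha = \bigcup_n \{n\}\times X^{\alpha_n}$ given by $A \in \mathrm{fin}^\alpha$ iff $\{n : A \cap (\{n\}\times X^{\alpha_n}) \notin \mathrm{fin}^{\alpha_n}\}$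 is finite (identifying $\{n\}\times X^{\alpha_n}$ with $X^{\alpha_n}$). $\mathcal{I}$ is uniformly weakly $P^+$ if there is a Borel function $\Phi$ such that for every $\subseteq$-decreasing sequence $\langle A_n : n\in\omega\rangle$ of $\mathcal{I}$-positive sets, $\Phi(\langle A_n\rangle)\in\mathcal{I}^+$ and $\Phi(\langle A_n\rangle)\subseteq_{\mathcal{I}} A_n$ for every $n$. *)

(* Defs.v *)
From HB Require Import structures.
From mathcomp Require Import all_boot all_order all_algebra.
From mathcomp Require Import all_classical all_reals all_analysis.
From mathcomp Require Import borel_hierarchy cantor.
Set Implicit Arguments. Unset Strict Implicit. Unset Printing Implicit Defensive.
Local Open Scope classical_set_scope.

Definition is_ideal (I : set (set nat)) : Prop :=
  [/\ (forall A B : set nat, B `<=` A -> I A -> I B),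
      (forall A B : set nat, I A -> I B -> I (A `|` B)),
      (forall A : set nat, finite_set A -> I A) &
      ~ I setT ].

Definition charf (A : set nat) : cantor_space := fun n => `[< A n >].

Definition Fsigma_ideal (I : set (set nat)) : Prop := Fsigma (charf @` I).

Definition Borel_fun {T U : topologicalType} (f : T -> U) : Prop :=
  forall V : set U, open V -> <<s (@open T) >> (f @^-1` V).

Definition seq_space : Type := prod_topology (fun _ : nat => cantor_space).

Definition unif_weakly_Pplus (I : set (set nat)) : Prop :=
  exists Phi : seq_space -> cantor_space,
    Borel_fun Phi /\
    forall A : nat -> set nat,
      (forall n, ~ I (A n)) ->
      (forall n, A n.+1 `<=` A n) ->
      let B := [set m | Phi (fun n => charf (A n)) m] in
      ~ I B /\ (forall n, I (B `\` A n)).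

(** Countable ordinals >= 1 as Brouwer trees (base 1, successor, limit). *)
Inductive ctree : Type :=
| CT1 : ctree
| CTS : ctree -> ctree
| CTL : (nat -> ctree) -> ctree.

Inductive cle : ctree -> ctree -> Prop :=
| cle_one : forall x, cle CT1 x
| cle_succ : forall x y, cle x y -> cle (CTS x) (CTS y)
| cle_cocone : forall x f k, cle x (f k) -> cle x (CTL f)
| cle_limiting : forall f x, (forall k, cle (f k) x) -> cle (CTL f) x.

Definition clt (x y : ctree) : Prop := cle (CTS x) y.

Fixpoint wf_ctree (t : ctree) : Prop :=
  match t with
  | CT1 => True
  | CTS s => wf_ctree s
  | CTL f => (forall n, wf_ctree (f n)) /\ (forall n, clt (f n) (f n.+1))
  end.

Fixpoint Xo (t : ctree) : Type :=
  match t with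
  | CT1 => nat
  | CTS s => (nat * Xo s)%type
  | CTL f => {n : nat & Xo (f n)}
  end.

Fixpoint fin_alpha (t : ctree) : set (Xo t) -> Prop :=
  match t return set (Xo t) -> Prop with
  | CT1 => fun A => finite_set A
  | CTS s => fun A =>
      finite_set [set n : nat | ~ @fin_alpha s [set y | A (n, y)]]
  | CTL f => fun A =>
      finite_set [set n : nat | ~ @fin_alpha (f n) [set y | A (existT _ n y)]]
  end.

Definition ideal_iso {Om : Type} (I : set (set nat)) (J : set (set Om)) : Prop :=
  exists h : nat -> Om, bijective h /\ forall A : set Om, J A <-> I (h @^-1` A).

(* Main.v *)
Require Import Defs.
From mathcomp Require Import all_boot all_order all_algebra.
From mathcomp Require Import all_classical all_reals all_analysis.
From mathcomp Require Import zify.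
Local Open Scope classical_set_scope.
Set Implicit Arguments. Unset Strict Implicit. Unset Printing Implicit Defensive.

Fixpoint cmax (Q : nat -> bool) (k : nat) : nat :=
  if k is k'.+1 then (if Q k' then k' else cmax Q k') else 0%N.

Lemma cmax_ge (Q : nat -> bool) k n : Q n -> (n < k)%N -> (n <= cmax Q k)%N.
Proof.
elim: k => // k IH Qn; rewrite ltnS leq_eqVlt => /predU1P[e|lt] /=; first by subst; rewrite Qn.
by case: ifP => _; [exact: ltnW | exact: IH].
Qed.

Lemma cmax_le (Q : nat -> bool) k n : (forall j, (n < j)%N -> ~~ Q j) -> (cmax Q k <= n)%N.
Proof.
move=> H; elim: k => //= k IH; case: ifPn => // Qk.
by rewrite leqNgt; apply/negP => /H; rewrite Qk.
Qed.

Lemma cmax_bound (Q : nat -> bool) k : (cmax Q k.+1 <= k)%N.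
Proof.
elim: k => [|k IH] /=; first by case: ifP.
case: ifP => // _; move: IH => /=; case: ifP => // _ h; exact: leq_trans h _.
Qed.

Lemma cmax_ext (Q Q' : nat -> bool) k : (forall j, (j < k)%N -> Q j = Q' j) -> cmax Q k = cmax Q' k.
Proof.
elim: k => //= k IH H; rewrite H // IH // => j hj; apply: H; exact: ltnW.
Qed.

Definition cf (K : nat -> set nat -> Prop) (x : nat -> nat -> bool) (m : nat) : nat :=
  cmax (fun n => `[< ~ K n [set a | (a < m)%N /\ x n a] >]) m.+1.

Lemma decr_le (S : nat -> set nat) : (forall n, S n.+1 `<=` S n) ->
  forall n n', (n <= n')%N -> S n' `<=` S n.
Proof.
move=> H n n'; elim: n' => [|n' IH]; first by rewrite leqn0 => /eqP ->.
rewrite leq_eqVlt => /predU1P[-> //|]; rewrite ltnS => /IH h.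
exact: subset_trans (H n') h.
Qed.

Section Core.
Variables (K : nat -> set nat -> Prop) (S : nat -> set nat).
Hypothesis Khered : forall n X Y, X `<=` Y -> K n Y -> K n X.
Hypothesis Kincr : forall n n' X, (n <= n')%N -> K n X -> K n' X.
Hypothesis Sdecr : forall n, S n.+1 `<=` S n.
Hypothesis Swit : forall n, exists p, ~ K n [set a | (a < p)%N /\ S n a].

Let x := fun n a => `[< S n a >].

Lemma segE n m : [set a | (a < m)%N /\ x n a] = [set a | (a < m)%N /\ S n a].
Proof. by apply/seteqP; split => a /= [h1 h2]; split => //; apply/asboolP. Qed.

Lemma core_C2 n m : K n [set a | (a < m)%N /\ S n a] -> (cf K x m <= n)%N.
Proof.
move=> Kn; rewrite /cf; apply: cmax_le => j lt; apply/asboolPn; rewrite segE.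
apply; apply: (Kincr (ltnW lt)); apply: Khered Kn => a /= [h1 h2]; split => //.
exact: (decr_le Sdecr (ltnW lt)).
Qed.

Lemma core_C1 n : exists N, forall m, (N <= m)%N -> (n <= cf K x m)%N.
Proof.
have [p Hp] := Swit n; exists (maxn p n) => m hm; apply: cmax_ge.
  apply/asboolP; rewrite segE => Kn; apply: Hp; apply: Khered Kn => a /= [h1 h2].
  split => //; apply: leq_trans h1 _; exact: leq_trans (leq_maxl _ _) hm.
by rewrite ltnS; exact: leq_trans (leq_maxr _ _) hm.
Qed.

Lemma core_C3 j : ~ K j [set m | S (cf K x m) m].
Proof.
have exP : exists p, `[< ~ K j [set a | (a < p)%N /\ S j a] >].
  by have [p Hp] := Swit j; exists p; apply/asboolP.
case: (ex_minnP exP) => p /asboolP Hp pmin KB; apply: Hp.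
apply: Khered KB => a /= [ap Sa].
have Ka : K j [set b | (b < a)%N /\ S j b].
  case: (pselect (K j [set b | (b < a)%N /\ S j b])) => // H.
  by have := pmin a (asboolT H); rewrite leqNgt ap.
have := core_C2 Ka => le; exact: (decr_le Sdecr le).
Qed.
End Core.


Lemma finite_bounded (X : set nat) : finite_set X -> exists N, X `<=` `I_N.
Proof.
move=> /finite_seqP [s ->]; elim: s => [|a s [N HN]]; first by exists 0%N.
exists (maxn a.+1 N) => y /=; rewrite inE => /orP[/eqP ->|ys].
  by apply: leq_trans (leq_maxl _ _).
by apply: leq_trans (HN y ys) (leq_maxr _ _).
Qed.

Lemma bounded_finite (X : set nat) N : X `<=` `I_N -> finite_set X.
Proof. by move=> h; apply: sub_finite_set h (finite_II N). Qed.

Lemma fa_set0 t : @fin_alpha t set0.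
Proof.
elim: t => [|s IH|f IH] /=; first exact: finite_set0.
  by apply: sub_finite_set (finite_set0 nat) => n /= [].
by apply: sub_finite_set (finite_set0 nat) => n /= /(_ (IH n)).
Qed.

Lemma fa_hered t : forall A B : set (Xo t), A `<=` B -> @fin_alpha t B -> @fin_alpha t A.
Proof.
elim: t => [|s IH|f IH] /= A B AB; first exact: sub_finite_set.
  apply: sub_finite_set => n /= nA nB; apply: nA; apply: IH nB => y; exact: AB.
apply: sub_finite_set => n /= nA nB; apply: nA; apply: IH nB => y; exact: AB.
Qed.


Lemma open_cantor_coord a b : open [set z : cantor_space | z a = b].
Proof.
have -> : [set z : cantor_space | z a = b] = (@proj nat (fun _ => bool) a) @^-1` [set b] by [].
apply: open_comp; [move=> + _; exact: proj_continuous | exact: discrete_open].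
Qed.

Lemma open_coord n a b : open [set x : seq_space | x n a = b].
Proof.
have -> : [set x : seq_space | x n a = b] =
  (@proj nat (fun _ => cantor_space) n) @^-1` [set z : cantor_space | z a = b] by [].
apply: open_comp; [move=> + _; exact: proj_continuous | exact: open_cantor_coord].
Qed.

Definition box (z : seq_space) N :=
  [set y : seq_space | forall n a, (n < N)%N -> (a < N)%N -> y n a = z n a].

Lemma box_in (W : set seq_space) z : nbhs z W -> exists N, box z N `<=` W.
Proof.
move=> Wz; apply: contrapT => H.
have H' : forall N, exists y, box z N y /\ ~ W y.
  move=> N; apply: contrapT => H2; apply: H; exists N => y by1.
  apply: contrapT => nW; apply: H2; by exists y.
pose g N := projT1 (cid (H' N)).
have gP N : box z N (g N) /\ ~ W (g N) := projT2 (cid (H' N)).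
have gcvg : g @ \oo --> z.
  apply/pointwise_cvgP => n.
  apply/pointwise_cvgP => a.
  move=> B /nbhs_singleton Bz; exists (maxn n a).+1 => // N /= hN.
  rewrite (proj1 (gP N)) //; apply: leq_trans hN; rewrite ltnS ?leq_maxl ?leq_maxr //.
have [N _ hN] : \oo (g @^-1` W) := gcvg W Wz.
by have := proj2 (gP N); apply; apply: hN => /=.
Qed.

Definition Bor (A : set seq_space) := <<s (@open seq_space) >> A.

Lemma Bor_open A : open A -> Bor A.
Proof. exact: sub_sigma_algebra. Qed.

Lemma Bor0 : Bor set0.
Proof. exact: sigma_algebra0. Qed.

Lemma BorC A : Bor A -> Bor (~` A).
Proof. exact: sigma_algebraC. Qed.

Lemma BorT : Bor setT.
Proof. by rewrite -setC0; apply: BorC; exact: Bor0. Qed.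

Lemma BorU (F : nat -> set seq_space) : (forall k, Bor (F k)) -> Bor (\bigcup_k F k).
Proof. exact: sigma_algebra_bigcup. Qed.

Lemma BorI (F : nat -> set seq_space) : (forall k, Bor (F k)) -> Bor (\bigcap_k F k).
Proof.
move=> h; rewrite -[X in Bor X]setCK setC_bigcap; apply: BorC; apply: BorU => k.
exact: BorC.
Qed.

Lemma Bor_coord n a b : Bor [set x : seq_space | x n a = b].
Proof. apply: Bor_open; exact: open_coord. Qed.

Lemma box_nbhs (z : seq_space) N : nbhs z (box z N).
Proof.
have NF : Filter (@nbhs seq_space seq_space z) := nbhs_filter z.
pose l := [seq (n, a) | n <- iota 0 N, a <- iota 0 N].
suff : nbhs z [set y : seq_space | forall p, p \in l -> y p.1 p.2 = z p.1 p.2].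
  apply: filterS => y hy n a hn ha; apply: (hy (n, a)).
  by apply/allpairsPdep; exists n, a; rewrite !mem_iota /= !add0n hn ha.
elim: l => [|p l IH]; first by apply: (@filterS _ _ NF setT) => [y _ p|]; [|exact: (@filterT _ _ NF)].
have hp : nbhs z [set y : seq_space | y p.1 p.2 = z p.1 p.2].
  by apply: open_nbhs_nbhs; split => //; exact: open_coord.
apply: filterS (filterI hp IH) => y [h1 h2] q; rewrite inE => /orP[/eqP ->|]//.
exact: h2.
Qed.

Lemma fin_det_open (E : set seq_space) N :
  (forall x y, (forall n a, (n < N)%N -> (a < N)%N -> y n a = x n a) -> E x -> E y) ->
  open E.
Proof.
move=> h; rewrite openE => x Ex; rewrite /interior.
by apply: filterS (box_nbhs x N) => y hy; exact: h hy Ex.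
Qed.

Definition decs (s : seq (seq bool)) : seq_space := fun n a => nth false (nth [::] s n) a.

Lemma Bor_preim_box (f : seq_space -> seq_space) (z : seq_space) N :
  (forall n a, Bor [set x | f x n a]) -> Bor (f @^-1` box z N).
Proof.
move=> hf.
have -> : f @^-1` box z N = \bigcap_n \bigcap_a
   (if (n < N)%N && (a < N)%N then [set x | f x n a = z n a] else setT).
  apply/seteqP; split => x /=.
    move=> h n _ a _; case: ifP => // /andP[h1 h2]; exact: h.
  move=> h n a h1 h2; have := h n I a I; by rewrite h1 h2.
apply: BorI => n; apply: BorI => a; case: ifP => _; last exact: BorT.
case: (z n a).
  suff -> : [set x | f x n a = true] = [set x | f x n a] by [].
  by [].
have -> : [set x | f x n a = false] = ~` [set x | f x n a].
  by apply/seteqP; split => x /=; case: (f x n a).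
exact: BorC.
Qed.

Lemma L_cyl_seq (f : seq_space -> seq_space) :
  (forall n a, Bor [set x | f x n a]) -> forall W, open W -> Bor (f @^-1` W).
Proof.
move=> hf W oW.
pose Wj (j : nat) : set seq_space :=
  match @unpickle (nat * seq (seq bool))%type j with
  | Some (N, s) => if `[< box (decs s) N `<=` W >] then box (decs s) N else set0
  | None => set0 end.
have -> : f @^-1` W = \bigcup_j (f @^-1` Wj j).
  apply/seteqP; split => x /=; last first.
    move=> [j _]; rewrite /Wj; case: unpickle => [[N s]|] //.
    by case: ifPn => // /asboolP h; exact: h.
  move=> Wfx; have : nbhs (f x) W by move: oW; rewrite openE; exact.
  move=> /box_in [N hN].
  pose s := mkseq (fun n => mkseq (fun a => f x n a) N) N.
  have eqb : box (decs s) N = box (f x) N.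
    apply/seteqP; split => y /= h n a hn ha; rewrite h //;
      by rewrite /decs /s !nth_mkseq.
  exists (pickle (N, s)) => //; rewrite /Wj pickleK eqb.
  rewrite asboolT //; by move=> n a hn ha.
apply: BorU => j; rewrite /Wj; case: unpickle => [[N s]|]; last exact: Bor0.
case: ifP => _; last exact: Bor0.
exact: Bor_preim_box.
Qed.

Lemma L_cantor (f : seq_space -> cantor_space) :
  (forall m, Bor [set x | f x m]) -> Borel_fun f.
Proof.
move=> hf V oV.
pose f' : seq_space -> seq_space := fun x => fun _ => f x.
have -> : f @^-1` V = f' @^-1` [set y : seq_space | V (y 0%N)] by [].
apply: L_cyl_seq => //.
have -> : [set y : seq_space | V (y 0%N)] =
  (@proj nat (fun _ => cantor_space) 0%N) @^-1` V by [].
apply: open_comp; [move=> + _; exact: proj_continuous | exact: oV].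
Qed.



Lemma Bor_finite (P : nat -> seq_space -> Prop) :
  (forall k, Bor [set x | ~ P k x]) -> Bor [set x | finite_set [set k | P k x]].
Proof.
move=> hP.
have -> : [set x | finite_set [set k | P k x]] =
   \bigcup_N \bigcap_k (if (N <= k)%N then [set x | ~ P k x] else setT).
  apply/seteqP; split => x /=.
    move=> /finite_seqP [s hs].
    have [N HN] : exists N, forall k, P k x -> (k < N)%N.
      have : finite_set [set k | P k x] by rewrite hs.
      move=> /finite_bounded [N HN]; exists N => k hk; exact: HN.
    exists N => // k _; case: ifP => // hk Pk; have := HN k Pk; by rewrite ltnNge hk.
  move=> [N _ h]; apply: (@sub_finite_set _ _ `I_N); last exact: finite_II.
  move=> k /= Pk; rewrite ltnNge; apply/negP => hk; have := h k I; rewrite hk; exact.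
apply: BorU => N; apply: BorI => k; case: ifP => _; [exact: hP | exact: BorT].
Qed.

Lemma Bor_notnot (P : seq_space -> Prop) : Bor [set x | P x] -> Bor [set x | ~ ~ P x].
Proof. by move=> h; have -> : [set x | ~ ~ P x] = [set x | P x] by apply/seteqP; split => x /=; [exact: contrapT | move=> ? ?]. Qed.

Lemma Bor_fa t : forall (phi : Xo t -> nat) n,
  Bor [set x : seq_space | @fin_alpha t [set y | x n (phi y)]].
Proof.
elim: t => [|s IH|f IH] phi n /=.
- apply: Bor_finite => k.
  have -> : [set x : seq_space | ~ x n (phi k)] = [set x | x n (phi k) = false].
    by apply/seteqP; split => x /=; case: (x n (phi k)).
  exact: Bor_coord.
- apply: Bor_finite => k; apply: Bor_notnot; exact: (IH (fun y => phi (k, y))).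
- apply: Bor_finite => k; apply: Bor_notnot; exact: (IH k (fun y => phi (existT _ k y))).
Qed.

Lemma compact_lemma (G : set cantor_space) (X : set nat) : closed G ->
  (forall m, exists Y, [set a | (a < m)%N /\ X a] `<=` Y /\ G (charf Y)) ->
  exists Z, X `<=` Z /\ G (charf Z).
Proof.
move=> cG h.
have cpt : compact G.
  apply: (subclosed_compact cG cantor_space_compact) => //.
pose Y m := projT1 (cid (h m)).
have YP m : [set a | (a < m)%N /\ X a] `<=` Y m /\ G (charf (Y m)) := projT2 (cid (h m)).
pose u m := charf (Y m).
have FG : (u @ \oo) G by exists 0%N => // m _; exact: (proj2 (YP m)).
have [z [Gz clz]] := cpt _ _ FG.
exists [set a | z a]; split; last first.
  have -> : charf [set a | z a] = z.
    by apply/funext => a; rewrite /charf asboolb.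
  exact: Gz.
move=> a Xa /=; apply/negP => /negP za.
have zf : z a = false by move: za; case: (z a).
have nb : nbhs z [set w : cantor_space | w a = false].
  by apply: open_nbhs_nbhs; split => //; exact: open_cantor_coord.
have Fa : (u @ \oo) [set w : cantor_space | w a = true].
  exists a.+1 => // m /= hm; rewrite /u /charf; apply/asboolP.
  by apply: (proj1 (YP m)); split.
have [w [/= w1 w2]] := clz _ _ Fa nb.
by rewrite w1 in w2.
Qed.


Lemma K_case (I : set (set nat)) (K : nat -> set nat -> Prop) :
  is_ideal I ->
  (forall n X Y, X `<=` Y -> K n Y -> K n X) ->
  (forall n n' X, (n <= n')%N -> K n X -> K n' X) ->
  (forall X, I X -> exists n, K n X) ->
  (forall n X, K n X -> I X) ->
  (forall n X, ~ K n X -> exists p, ~ K n [set a | (a < p)%N /\ X a]) ->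
  unif_weakly_Pplus I.
Proof.
move=> [Ihered _ Ifin _] Kh Ki IK KI Kw.
exists (fun x : seq_space => (fun m => x (cf K x m) m) : cantor_space); split.
  apply: L_cantor => m; apply: Bor_open; apply: (@fin_det_open _ m.+1) => x y hxy /=.
  have -> : cf K y m = cf K x m.
    rewrite /cf; apply: cmax_ext => j hj; congr (asbool (~ K j _)).
    apply/seteqP; split => a /= [ha h]; split => //.
      by rewrite -hxy // (ltn_trans ha (ltnSn m)).
    by rewrite hxy // (ltn_trans ha (ltnSn m)).
  by rewrite hxy // ltnS cmax_bound.
move=> A Apos Adecr /=.
have Sw : forall n, exists p, ~ K n [set a | (a < p)%N /\ A n a].
  move=> n; apply: Kw => Kn; apply: (Apos n); exact: KI Kn.
split.
  move=> IB; have [j Kj] := IK _ IB; apply: (@core_C3 _ _ Kh Ki Adecr Sw j).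
  by apply: Kh Kj => m /= h; apply/asboolP.
move=> n; have [N HN] := core_C1 Kh Sw n.
apply: (Ihered `I_N); last exact: Ifin (finite_II N).
move=> m /= [Bm nAm]; rewrite ltnNge; apply/negP => hm; apply: nAm.
have le := HN m hm; apply: (decr_le Adecr le); exact/asboolP.
Qed.

Lemma col_case (I : set (set nat)) (col : nat -> nat) (Pos : nat -> set nat -> Prop) :
 (forall X, I X <-> finite_set [set k | Pos k X]) ->
 (forall k X Y, X `<=` Y -> Pos k X -> Pos k Y) ->
 (forall k X, Pos k X -> Pos k (X `&` [set m | col m = k])) ->
 (forall k, ~ Pos k set0) ->
 (forall k n, Bor [set x : seq_space | Pos k [set m | x n m]]) ->
 unif_weakly_Pplus I.
Proof.
move=> IP Pm Pl P0 PB.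
pose K0 (n : nat) (X : set nat) := X `<=` `I_n.
have K0h : forall n X Y, X `<=` Y -> K0 n Y -> K0 n X.
  by move=> n X Y XY h a /XY /h.
have K0i : forall n n' X, (n <= n')%N -> K0 n X -> K0 n' X.
  by move=> n n' X le h a /h /= ha; exact: leq_trans ha le.
pose sx (x : seq_space) : seq_space := fun n k => `[< Pos k [set m | x n m] >].
exists (fun x : seq_space => (fun m => x (cf K0 (sx x) (col m)) m) : cantor_space); split.
  apply: L_cantor => m.
  pose u (x : seq_space) : seq_space := fun n => if odd n then sx x n./2 else x n./2.
  have uB : forall W, open W -> Bor (u @^-1` W).
    apply: L_cyl_seq => n a; rewrite ?/u /=; case: (odd n) => /=.
      have -> : [set x : seq_space | sx x n./2 a] = [set x | Pos a [set m | x n./2 m]].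
        by apply/seteqP; split => x /= /asboolP.
      exact: PB.
    have -> : [set x : seq_space | x n./2 a] = [set x | x n./2 a = true] by [].
    exact: Bor_coord.
  set k := col m.
  pose E := [set y : seq_space | y (cf K0 (fun n => y n.*2.+1) k).*2 m].
  have -> : [set x | x (cf K0 (sx x) k) m] = u @^-1` E.
    have ue x : (fun n => u x n.*2.+1) = sx x.
      by apply/funext => n; rewrite /u /= odd_double /= uphalf_double.
    apply/seteqP; split => x /=; rewrite /E /= ue /u odd_double half_double //.
  apply: uB; apply: (@fin_det_open _ (k.*2 + m).+2) => y z hyz /=.
rewrite /E /=.   have -> : cf K0 (fun n => z n.*2.+1) k = cf K0 (fun n => y n.*2.+1) k.
    rewrite /cf; apply: cmax_ext => j hj; congr (asbool (~ K0 j _)).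
    apply/seteqP; split => a /= [ha h]; split => //.
      by rewrite -hyz //; rewrite -!muln2; lia.
    by rewrite hyz //; rewrite -!muln2; lia.
  have cb := cmax_bound (fun n => `[< ~ K0 n [set a | (a < k)%N /\ (fun n0 => y n0.*2.+1) n a] >]) k.
  rewrite hyz //; move: cb; rewrite /cf -!muln2; lia.
move=> A Apos Adecr /=.
pose S n := [set k | Pos k (A n)].
have sxE : sx (fun n => charf (A n)) = (fun n a => `[< S n a >]).
  apply/funext => n; apply/funext => a; rewrite /sx; congr asbool; congr (Pos a _).
  by apply/seteqP; split => m /=; [move/asboolP | move=> h; apply/asboolP].
rewrite sxE.
have Sdecr : forall n, S n.+1 `<=` S n by move=> n k; apply: Pm; exact: Adecr.
have Sw : forall n, exists p, ~ K0 n [set a | (a < p)%N /\ S n a].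
  move=> n; apply: contrapT => H.
  apply: (Apos n); apply/IP; apply: (@bounded_finite _ n) => a Sa.
  rewrite /= ltnNge; apply/negP => na; apply: H; exists a.+1 => h.
  by have := h a (conj (ltnSn a) Sa); rewrite /= ltnNge na.
split.
  move=> /IP fin; have [j Hj] := finite_bounded fin.
  apply: (@core_C3 _ _ K0h K0i Sdecr Sw j).
  move=> k /= Sk; apply: Hj => /=.
  have := Pl _ _ Sk; apply: Pm => m /= [Am cm]; rewrite cm; exact/asboolP.
move=> n; apply/IP; have [N HN] := core_C1 K0h Sw n.
apply: (@bounded_finite _ N) => k /= Pk; rewrite ltnNge; apply/negP => hk.
apply: (P0 k); have := Pl _ _ Pk; apply: Pm => m /= [[Bm nAm] cm]; apply: nAm.
by move: Bm; rewrite cm => /asboolP; apply: (decr_le Adecr (HN k hk)).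
Qed.

Lemma Fsigma_case I : is_ideal I -> Fsigma_ideal I -> unif_weakly_Pplus I.
Proof.
move=> Iid [F Fc Feq]; have Iid' := Iid; case: Iid' => Ih Iu Ifin _.
pose G n := [set z | exists2 j, (j <= n)%N & F j z].
have Gc : forall n, closed (G n).
  elim=> [|n IH].
    have -> : G 0%N = F 0%N.
      apply/seteqP; split => z /=; last by exists 0%N.
      by case=> j; rewrite leqn0 => /eqP ->.
    exact: Fc.
  have -> : G n.+1 = G n `|` F n.+1.
    apply/seteqP; split => z /=.
      case=> j; rewrite leq_eqVlt => /predU1P[-> Fz|]; first by right.
      by rewrite ltnS => jn Fz; left; exists j.
    by case=> [[j jn Fz]|Fz]; [exists j => //; exact: leqW | exists n.+1].
  exact: closedU.
pose K n (X : set nat) := forall m, exists Y, [set a | (a < m)%N /\ X a] `<=` Y /\ G n (charf Y).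
apply: (@K_case _ K) => //.
- move=> n X Y XY KY m; have [Z [h1 h2]] := KY m; exists Z; split => // a [am Xa].
  by apply: h1; split => //; exact: XY.
- move=> n n' X le KX m; have [Z [h1 [j jn Fz]]] := KX m; exists Z; split => //.
  by exists j => //; exact: leq_trans jn le.
- move=> X IX; have : (charf @` I) (charf X) by exists X.
  rewrite Feq => -[j _ Fj]; exists j => m; exists X; split; first by move=> a [].
  by exists j.
- move=> n X KX; have [Z [XZ GZ]] := compact_lemma (Gc n) KX.
  have [j _ Fj] := GZ.
  have : (\bigcup_i F i) (charf Z) by exists j.
  rewrite -Feq => -[W IW eW].
  have WZ : W = Z.
    apply/seteqP; split => a ha; move: (congr1 (fun f => f a) eW); rewrite /charf => e.
      by apply/asboolP; rewrite -e; apply/asboolP.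
    by apply/asboolP; rewrite e; apply/asboolP.
  by apply: (Ih Z) XZ _; rewrite -WZ.
- move=> n X nK; apply: contrapT => H; apply: nK => m; apply: contrapT => H2.
  apply: H; exists m => Km; have [Y [h1 h2]] := Km m; apply: H2; exists Y; split => //.
  by move=> a [am Xa]; apply: h1; split.
Qed.

Lemma iso_case I t : is_ideal I -> ideal_iso I (@fin_alpha t) -> unif_weakly_Pplus I.
Proof.
move=> Iid [h [[g hg gh] hiso]].
have IE : forall X, I X <-> @fin_alpha t [set p | X (g p)].
  move=> X; have E : h @^-1` [set p | X (g p)] = X.
    by apply/seteqP; split => m /=; rewrite hg.
  by split => H; [apply/hiso; rewrite E | move/hiso: H; rewrite E].
case: t h g hg gh hiso IE => [|s|f] h g hg gh hiso IE.
- have IfinE : forall X, I X <-> finite_set X.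
    move=> X; rewrite IE.
    have E1 : [set p | X (g p)] = h @` X.
      apply/seteqP; split => p /=; first by move=> Xg; exists (g p) => //; rewrite gh.
      by case=> m Xm <-; rewrite hg.
    have E2 : g @` (h @` X) = X.
      apply/seteqP; split => m /=; first by case=> p [m' Xm' <-] <-; rewrite hg.
      by move=> Xm; exists (h m); [exists m | rewrite hg].
    rewrite /= E1; split => H; last exact: finite_image.
    by rewrite -E2; exact: finite_image.
  pose K0 (n : nat) (X : set nat) := X `<=` `I_n.
  apply: (@K_case _ K0) => //.
  + by move=> n X Y XY hY a /XY /hY.
  + by move=> n n' X le hX a /hX /= ha; exact: leq_trans ha le.
  + by move=> X /IfinE /finite_bounded.
  + by move=> n X hX; apply/IfinE; exact: bounded_finite hX.
  + move=> n X nK; apply: contrapT => H; apply: nK => a Xa.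
    rewrite /= ltnNge; apply/negP => na; apply: H; exists a.+1 => h'.
    by have := h' a (conj (ltnSn a) Xa); rewrite /= ltnNge na.
- apply: (@col_case _ (fun m => (h m).1) (fun k X => ~ @fin_alpha s [set y | X (g (k, y))])).
  + exact: IE.
  + by move=> k X Y XY nX fY; apply: nX; apply: fa_hered fY => y; exact: XY.
  + move=> k X nX fXc; apply: nX; apply: fa_hered fXc => y /= Xy; split => //.
    by rewrite gh.
  + by move=> k; apply; exact: (fa_set0 s).
  + by move=> k n; exact: BorC (Bor_fa (fun y => g (k, y)) n).
- apply: (@col_case _ (fun m => projT1 (h m))
     (fun k X => ~ @fin_alpha (f k) [set y | X (g (existT _ k y))])).
  + exact: IE.
  + by move=> k X Y XY nX fY; apply: nX; apply: fa_hered fY => y; exact: XY.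
  + move=> k X nX fXc; apply: nX; apply: fa_hered fXc => y /= Xy; split => //.
    by rewrite gh.
  + by move=> k; apply; exact: (fa_set0 (f k)).
  + by move=> k n; exact: BorC (Bor_fa (fun y => g (existT _ k y)) n).
Qed.

Unset Implicit Arguments.

Theorem lemma5p3 (I : set (set nat)) :
  is_ideal I ->
  (Fsigma_ideal I \/
   exists t : ctree, wf_ctree t /\ ideal_iso I (@fin_alpha t)) ->
  unif_weakly_Pplus I.
Proof.
move=> Iid [Fs | [t [_ iso]]]; first exact: Fsigma_case.
exact: iso_case iso.
Qed.
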